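(* Let $\psi\in\mathcal H$ be a normalized eigenvector of $U_\Bbbk$, $U_\Bbbk\psi=e^{i\theta}\psi$, let $\Psi_\Bbbk=(\psi,\bar UP_{[\![1]\!]}\psi)/\Gamma^{1/2}$ with $\Gamma=1+\langle\psi,P_{[\![1]\!]}\psi\rangle$, and let $\bar\mu_\Bbbk([\![\mathrm y]\!])=\langle\Psi_\Bbbk,\widetilde P_{[\![\mathrm y]\!]}\Psi_\Bbbk\rangle$. Then for every integer $1\leq n<\Bbbk-1$, $$\frac1n h_n(\bar\mu_\Bbbk)\geq\frac1{\Bbbk-1}h_{\Bbbk-1}(\bar\mu_\Bbbk)-\frac{n\log2}{\Bbbk-1}.$$
   Context: Let $\Bbbk\geq3$ and $\mathcal H=(\mathbb C^2)^{\otimes\Bbbk}$ with orthonormal basis $|\mathrm x\rangle=|\mathrm x_1\rangle\otimes\cdots\otimes|\mathrm x_\Bbbk\rangle$, $\mathrm x_i\in\{0,1\}$. For a binary word $\mathrm w$ of length $m\leq\Bbbk$, $P_{[\![\mathrm w]\!]}$ is the orthogonal projection onto the span of the $|\mathrm x\rangle$ whose first $m$ digits equal $\mathrm w$. Let $\mathbf U$ be a $2\times2$ unitary with all entries of modulus $2^{-1/2}$, $\bar U|\mathrm x\rangle=|\mathrm x_2\rangle\otimes\cdots\otimes|\mathrm x_\Bbbk\rangle\otimes\mathbf U|\mathrm x_1\rangle$, $\sigma$ the unitary exchanging the last two tensor factors, and $P'_{[\![j]\!]}=\bar UP_{[\![j]\!]}\bar U^*$. Let $U_\Bbbk=\bar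 UP_{[\![0]\!]}+\sigma\bar U^2P_{[\![1]\!]}$, i.e. $U_\Bbbk|\mathrm x\rangle=|\mathrm x_2\rangle\otimes\cdots\otimes|\mathrm x_\Bbbk\rangle\otimes\mathbf U|\mathrm x_1\rangle$ if $\mathrm x_1=0$ and $U_\Bbbk|\mathrm x\rangle=|\mathrm x_3\rangle\otimes\cdots\otimes|\mathrm x_\Bbbk\rangle\otimes\mathbf U|\mathrm x_2\rangle\otimes\mathbf U|\mathrm x_1\rangle$ if $\mathrm x_1=1$. Tower space $\widetilde{\mathcal H}=\mathcal H\oplus P'_{[\![1]\!]}\mathcal H$ with direct-sum scalar product. For a binary word $\mathrm y$ of length $n\leq\Bbbk-1$, $\widetilde P_{[\![\mathrm y]\!]}=P_{[\![\mathrm y]\!]}\oplus P'_{[\![1]\!]}P_{[\![\mathrm y]\!]}$, and $h_n(\bar\mu_\Bbbk)=-\sum_{|\mathrm y|=n}\bar\mu_\Bbbk([\![\mathrm y]\!])\log\bar\mu_\Bbbk([\![\mathrm y]\!])$ (with $0\log0=0$). *)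

(* Defs.v *)
From HB Require Import structures.
From mathcomp Require Import all_boot all_order all_algebra.
From mathcomp Require Export complex.
From mathcomp Require Export reals exp.
Unset Printing Implicit Defensive.
Import Order.TTheory GRing.Theory Num.Theory.
Local Open Scope ring_scope.

Section QuantumWalk.
Variable R : realType.
Local Notation C := R[i].

(* Basis of H = (C^2)^{(x) k}: binary words x = x_1...x_k, encoded as
   k-tuples of booleans; digit x_{i+1} is [nth false x i]. *)
Definition word (k : nat) := k.-tuple bool.

Definition vec (k : nat) := word k -> C.
Definition op (k : nat) := word k -> word k -> C.

Definition app k (A : op k) (v : vec k) : vec k := fun z => \sum_(x : word k) A z x * v x.
Definition opmul k (A B : op k) : op k := fun z x => \sum_(y : word k) A z y * B y x.
Definition opadd k (A B : op k) : op k := fun z x => A z x + B z x.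
Definition adj k (A : op k) : op k := fun z x => (A x z)^*.
Definition inner k (u v : vec k) : C := \sum_(z : word k) (u z)^* * v z.

Definition bI (b : bool) : 'I_2 := inord (nat_of_bool b).

(* projection P_[[w]] onto span of |x> whose first |w| digits equal w *)
Definition Pw k (w : seq bool) : op k :=
  fun z x => ((z == x) && (take (size w) x == w))%:R.

(* Ubar |x> = |x_2> (x) ... (x) |x_k> (x) U |x_1>, with U|b> = sum_c U_{c b}|c> *)
Definition Ubar k (U : 'M[C]_2) : op k :=
  fun z x => (behead x == take k.-1 z)%:R *
             U (bI (nth false z k.-1)) (bI (nth false x 0)).

(* sigma: exchange of the last two tensor factors (positions k-1 and k) *)
Definition swapidx (k i : nat) : nat :=
  if i == k.-2 then k.-1 else if i == k.-1 then k.-2 else i.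
Definition sigma k : op k :=
  fun z x => (val z == [seq nth false x (swapidx k i) | i <- iota 0 k])%:R.

Definition Uk k (U : 'M[C]_2) : op k :=
  opadd k (opmul k (Ubar k U) (Pw k [:: false]))
        (opmul k (sigma k) (opmul k (opmul k (Ubar k U) (Ubar k U)) (Pw k [:: true]))).

Definition P'1 k (U : 'M[C]_2) : op k :=
  opmul k (opmul k (Ubar k U) (Pw k [:: true])) (adj k (Ubar k U)).

(* Tower space H (+) P'_[[1]] H, modelled as pairs of vectors of H whose second
   component lies in P'_[[1]] H, with the direct-sum scalar product. *)
Definition inner2 k (u v : vec k * vec k) : C := inner k u.1 v.1 + inner k u.2 v.2.

Definition tPw k (U : 'M[C]_2) (y : seq bool) (u : vec k * vec k) : vec k * vec k :=
  (app k (Pw k y) u.1, app k (opmul k (P'1 k U) (Pw k y)) u.2).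

Definition Gamma k (psi : vec k) : C := 1 + inner k psi (app k (Pw k [:: true]) psi).

Definition PsiK k (U : 'M[C]_2) (psi : vec k) : vec k * vec k :=
  (fun z => (sqrtC (Gamma k psi))^-1 * psi z,
   fun z => (sqrtC (Gamma k psi))^-1 * app k (opmul k (Ubar k U) (Pw k [:: true])) psi z).

(* bar mu_k([[y]]) = <Psi_k, tilde P_[[y]] Psi_k>  (a real number; we take the
   real part of the complex scalar product) *)
Definition mubar k (U : 'M[C]_2) (psi : vec k) (y : seq bool) : R :=
  complex.Re (inner2 k (PsiK k U psi) (tPw k U y (PsiK k U psi))).

Definition xlogx (t : R) : R := if t == 0 then 0 else t * ln t.

Definition hn k (U : 'M[C]_2) (psi : vec k) (n : nat) : R :=
  - \sum_(y : n.-tuple bool) xlogx (mubar k U psi (val y)).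

Definition unitary2 (U : 'M[C]_2) : Prop :=
  (map_mx Num.conj U)^T *m U = 1%:M /\ U *m (map_mx Num.conj U)^T = 1%:M.

End QuantumWalk.

(* Main.v *)
Require Import Defs.
From HB Require Import structures.
From mathcomp Require Import all_boot all_order all_algebra.
From mathcomp Require Import complex reals exp.
From mathcomp Require Import lra zify ring.
From Stdlib Require Import FunctionalExtensionality.
Import Order.TTheory GRing.Theory Num.Theory.
Local Open Scope ring_scope.

Section BSum.
Variable V : zmodType.
Fixpoint bsum (n : nat) (F : seq bool -> V) : V :=
  if n is n'.+1 then bsum n' (fun s => F (false :: s)) + bsum n' (fun s => F (true :: s))
  else F [::].

Lemma bsum_ext n F G : (forall s, size s = n -> F s = G s) -> bsum n F = bsum n G.
Proof.
elim: n F G => [|n IH] F G H /=; first by apply: H.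
by congr (_ + _); apply: IH => s hs; apply: H; rewrite /= hs.
Qed.

Lemma bsumD n F G : bsum n (fun s => F s + G s) = bsum n F + bsum n G.
Proof.
elim: n F G => [|n IH] F G //=.
by rewrite (IH (fun s => F (false :: s))) (IH (fun s => F (true :: s))) addrACA.
Qed.

Lemma bsum0 n : bsum n (fun _ => 0) = 0.
Proof. by elim: n => [|n IH] //=; rewrite IH addr0. Qed.

Lemma bsum_cat a b F :
  bsum (a + b) F = bsum a (fun x => bsum b (fun z => F (x ++ z))).
Proof.
elim: a F => [|a IH] F //=.
by rewrite (IH (fun s => F (false :: s))) (IH (fun s => F (true :: s))).
Qed.

Lemma bsum_rcons n F :
  bsum n.+1 F = bsum n (fun s => F (rcons s false) + F (rcons s true)).
Proof.
rewrite -addn1 bsum_cat; apply: bsum_ext => s _ /=.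
by rewrite !cats1.
Qed.

Lemma bsum_swap a b (F : seq bool -> seq bool -> V) :
  bsum a (fun x => bsum b (fun z => F x z)) = bsum b (fun z => bsum a (fun x => F x z)).
Proof.
elim: a F => [|a IH] F //=.
by rewrite (IH (fun x z => F (false :: x) z)) (IH (fun x z => F (true :: x) z)) -bsumD.
Qed.

Lemma bsum_tuple n (F : seq bool -> V) :
  \sum_(t : n.-tuple bool) F (val t) = bsum n F.
Proof.
elim: n F => [|n IH] F /=.
  rewrite (bigD1 [tuple]) //= big1 ?addr0 // => t /eqP ht.
  by exfalso; apply: ht; exact: tuple0.
rewrite (reindex (fun p : bool * n.-tuple bool => cons_tuple p.1 p.2)) /=; last first.
  exists (fun t => (thead t, behead_tuple t)).
    by case=> b t _ /=; congr pair; apply: val_inj.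
  by move=> t _ /=; apply: val_inj; rewrite /= [in RHS](tuple_eta t).
rewrite -(pair_big xpredT xpredT (fun b (t : n.-tuple bool) => F (b :: val t))) /=.
rewrite big_bool /= addrC.
by rewrite (IH (fun s => F (false :: s))) (IH (fun s => F (true :: s))).
Qed.
End BSum.
Arguments bsum {V} n F.
Arguments bsum_ext {V n F G} _.
Arguments bsumD {V} n F G.
Arguments bsum0 {V} n.
Arguments bsum_cat {V} a b F.
Arguments bsum_rcons {V} n F.
Arguments bsum_swap {V} a b F.
Arguments bsum_tuple {V} n F.

Section BSumR.
Variable V : pzRingType.
Lemma bsumZ n (c : V) F : c * bsum n F = bsum n (fun s => c * F s).
Proof.
elim: n F => [|n IH] F //=.
by rewrite mulrDr (IH (fun s => F (false :: s))) (IH (fun s => F (true :: s))).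
Qed.

Lemma bsum_indic n (w : seq bool) (F : seq bool -> V) : size w = n ->
  bsum n (fun s => (s == w)%:R * F s) = F w.
Proof.
elim: n w F => [|n IH] w F /=.
  by case: w => // _; rewrite eqxx mul1r.
case: w => // b w [] hw.
have E0 : forall c : bool, bsum n (fun s => ((c :: s == b :: w)%:R * F (c :: s)))
   = (c == b)%:R * F (c :: w).
  move=> c; rewrite -(IH w (fun s => (c == b)%:R * F (c :: s))) //.
  by apply: bsum_ext => s _; rewrite eqseq_cons; case: (c == b); case: (s == w);
     rewrite /= ?mul0r ?mul1r ?mulr0 ?mulr1.
rewrite (E0 false) (E0 true).
by move: E0 => _; case: b; rewrite /= ?mul0r ?mul1r ?add0r ?addr0.
Qed.
End BSumR.
Arguments bsumZ {V} n c F.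
Arguments bsum_indic {V} n w F _.

Section BSumNum.
Variable V : numDomainType.
Lemma bsum_le n (F G : seq bool -> V) : (forall s, size s = n -> F s <= G s) ->
  bsum n F <= bsum n G.
Proof.
elim: n F G => [|n IH] F G H /=; first by apply: H.
by apply: lerD; apply: IH => s hs; apply: H; rewrite /= hs.
Qed.
Lemma bsum_ge0 n (F : seq bool -> V) : (forall s, size s = n -> 0 <= F s) ->
  0 <= bsum n F.
Proof. by move=> H; rewrite -(bsum0 n); apply: bsum_le. Qed.
End BSumNum.

Lemma bsumN (V : zmodType) n (F : seq bool -> V) : bsum n (fun s => - F s) = - bsum n F.
Proof. by apply/eqP; rewrite -subr_eq0 opprK -bsumD (bsum_ext (G := fun _ => 0)) ?bsum0 // => s _; rewrite addNr. Qed.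

Section Entropy.
Variables (R : realType) (m : nat) (mu : seq bool -> R).
Hypothesis H0 : mu [::] = 1.
Hypothesis Hnn : forall y, (size y <= m)%N -> 0 <= mu y.
Hypothesis Hr : forall y, (size y < m)%N -> mu y = mu (rcons y false) + mu (rcons y true).
Hypothesis Hl : forall y, (size y < m)%N -> mu y = mu (false :: y) + mu (true :: y).

Definition Hent n := - bsum n (fun y => xlogx R (mu y)).

Lemma xlogxE (t : R) : xlogx R t = t * ln t.
Proof. by rewrite /xlogx; case: eqP => [->|_]; rewrite ?mul0r. Qed.

Lemma monoR x z : (size (x ++ z) <= m)%N -> mu (x ++ z) <= mu x.
Proof.
elim/last_ind: z => [|z b IH]; first by rewrite cats0.
rewrite -rcons_cat size_rcons => hs.
apply: le_trans (IH (ltnW hs)).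
rewrite [leRHS](Hr _ hs); case: b.
  by rewrite lerDr Hnn // size_rcons.
by rewrite lerDl Hnn // size_rcons.
Qed.

Lemma monoL x z : (size (x ++ z) <= m)%N -> mu (x ++ z) <= mu z.
Proof.
elim: x => [|b x IH] //= hs.
apply: le_trans (IH (ltnW hs)).
rewrite [leRHS](Hl _ hs); case: b.
  by rewrite lerDr Hnn.
by rewrite lerDl Hnn.
Qed.

Lemma mu_le1 y : (size y <= m)%N -> mu y <= 1.
Proof. by move=> h; rewrite -H0; apply: (monoR [::] y). Qed.

Lemma sum1 n : (n <= m)%N -> bsum n mu = 1.
Proof.
elim: n => [|n IH] hn //=.
rewrite -bsumD -IH ?(ltnW hn) //; apply: bsum_ext => s hs.
by rewrite -Hl // hs.
Qed.

Lemma margR a b x : size x = a -> (a + b <= m)%N -> bsum b (fun z => mu (x ++ z)) = mu x.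
Proof.
move=> hx; elim: b => [|b IH] hab; first by rewrite /= cats0.
rewrite bsum_rcons -IH; last by lia.
apply: bsum_ext => s hs; rewrite -!rcons_cat -Hr //.
by rewrite size_cat hx hs; lia.
Qed.

Lemma margL a b z : size z = b -> (a + b <= m)%N -> bsum a (fun x => mu (x ++ z)) = mu z.
Proof.
move=> hz; elim: a => [|a IH] hab //=.
rewrite -bsumD -IH; last by lia.
apply: bsum_ext => s hs /=; rewrite -Hl //.
by rewrite size_cat hz hs; lia.
Qed.

Lemma Hent_ge0 n : (n <= m)%N -> 0 <= Hent n.
Proof.
move=> hn; rewrite /Hent -bsumN; apply: bsum_ge0 => s hs.
rewrite xlogxE oppr_ge0; apply: mulr_ge0_le0; first by apply: Hnn; rewrite hs.
by apply: ln_le0; apply: mu_le1; rewrite hs.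
Qed.

Lemma gibbs (p q : R) : 0 <= p -> 0 <= q -> (0 < p -> 0 < q) ->
  - (p * ln p) <= - (p * ln q) + q - p.
Proof.
move=> hp hq hpq; have [->|p0] := eqVneq p 0; first by rewrite !mul0r; lra.
have pp : 0 < p by rewrite lt0r p0.
have qp := hpq pp.
have h1 : ln (q / p) <= q / p - 1.
  have e1 : 1 + (q / p - 1) = q / p by rewrite addrC subrK.
  rewrite -{1}e1; apply: le_ln1Dx.
  have : 0 < q / p by rewrite divr_gt0.
  lra.
rewrite ln_div ?posrE // in h1.
have h2 := ler_wpM2l hp h1.
have e : p * (q / p - 1) = q - p by rewrite mulrBr mulr1 mulrCA divff // mulr1.
rewrite e mulrBr in h2; lra.
Qed.

Lemma gibbs2 (p px pz : R) : 0 <= p -> p <= px -> p <= pz ->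
  - (p * ln p) <= (- (p * ln px) - (p * ln pz)) + (px * pz - p).
Proof.
move=> hp h1 h2; have [->|p0] := eqVneq p 0.
  have := mulr_ge0 (le_trans hp h1) (le_trans hp h2); rewrite !mul0r; lra.
have pp : 0 < p by rewrite lt0r p0.
have px0 : 0 < px by apply: lt_le_trans h1.
have pz0 : 0 < pz by apply: lt_le_trans h2.
have := @gibbs p (px * pz) hp (ltW (mulr_gt0 px0 pz0)) (fun _ => mulr_gt0 px0 pz0).
rewrite lnM ?posrE // mulrDr; lra.
Qed.

Lemma Hent0 : Hent 0 = 0.
Proof. by rewrite /Hent /= H0 xlogxE ln1 mulr0 oppr0. Qed.

Lemma Hent_sub a b : (a + b <= m)%N -> Hent (a + b) <= Hent a + Hent b.
Proof.
move=> hab.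
rewrite /Hent bsum_cat -bsumN.
pose A x z := - (mu (x ++ z) * ln (mu x)).
pose B x z := - (mu (x ++ z) * ln (mu z)).
pose D x z := mu x * mu z - mu (x ++ z).
have step : bsum a (fun x => - bsum b (fun z => xlogx R (mu (x ++ z)))) <=
   bsum a (fun x => bsum b (fun z => (A x z + B x z) + D x z)).
  apply: bsum_le => x hx; rewrite -bsumN; apply: bsum_le => z hz.
  rewrite xlogxE; apply: gibbs2.
  - by apply: Hnn; rewrite size_cat hx hz.
  - by apply: monoR; rewrite size_cat hx hz.
  - by apply: monoL; rewrite size_cat hx hz.
apply: le_trans step _; rewrite le_eqVlt; apply/orP; left; apply/eqP.
rewrite (bsum_ext (G := fun x => (bsum b (A x) + bsum b (B x)) + bsum b (D x))); last first.
  by move=> x _; rewrite !bsumD.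
rewrite !bsumD.
have eA : bsum a (fun x => bsum b (A x)) = - bsum a (fun y => xlogx R (mu y)).
  rewrite -bsumN; apply: bsum_ext => x hx.
  rewrite /A bsumN (bsum_ext (G := fun z => ln (mu x) * mu (x ++ z))); last first.
    by move=> z _; rewrite mulrC.
  by rewrite -bsumZ (margR _ _ _ hx) // xlogxE mulrC.
have eB : bsum a (fun x => bsum b (B x)) = - bsum b (fun y => xlogx R (mu y)).
  rewrite (bsum_swap a b (fun x z => B x z)) -bsumN; apply: bsum_ext => z hz.
  rewrite /B bsumN (bsum_ext (G := fun x => ln (mu z) * mu (x ++ z))); last first.
    by move=> x _; rewrite mulrC.
  by rewrite -bsumZ (margL _ _ _ hz) // xlogxE mulrC.
have eD : bsum a (fun x => bsum b (D x)) = 0.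
  rewrite (bsum_ext (G := fun x => mu x * bsum b mu - mu x)); last first.
    move=> x hx; rewrite /D bsumD bsumN -bsumZ (margR _ _ _ hx) //.
  rewrite (bsum_ext (G := fun x => 0)) ?bsum0 // => x _.
  by rewrite sum1 ?mulr1 ?subrr // (leq_trans _ hab) // leq_addl.
by rewrite eA eB eD addr0.
Qed.

Lemma Hent1 : (0 < m)%N -> Hent 1 <= ln 2.
Proof.
move=> m0; rewrite /Hent /= !xlogxE.
have e := Hl [::] m0; rewrite H0 in e.
have i2 : (0 : R) < 2^-1 by rewrite invr_gt0; lra.
have g0 := @gibbs (mu [:: false]) (2^-1) (Hnn [:: false] m0) (ltW i2) (fun _ => i2).
have g1 := @gibbs (mu [:: true]) (2^-1) (Hnn [:: true] m0) (ltW i2) (fun _ => i2).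
have h2 : (2^-1 + 2^-1 : R) = 1 by rewrite [RHS](splitr 1) mul1r.
have h3 : mu [:: false] * ln 2 + mu [:: true] * ln 2 = ln (2:R) by rewrite -mulrDl -e mul1r.
rewrite lnV ?posrE // !mulrN in g0 g1; lra.
Qed.

Lemma Hent_r r : (r <= m)%N -> Hent r <= r%:R * ln 2.
Proof.
elim: r => [|r IH] hr; first by rewrite Hent0 mul0r.
rewrite -addn1 natrD mulrDl mul1r.
apply: le_trans (Hent_sub r 1 _) _; first by rewrite addn1.
apply: lerD; first by apply: IH; apply: ltnW.
by apply: Hent1; apply: leq_ltn_trans hr.
Qed.

Lemma Hent_j j n : (j * n <= m)%N -> Hent (j * n) <= j%:R * Hent n.
Proof.
elim: j => [|j IH] h; first by rewrite mul0n Hent0 mul0r.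
rewrite mulSn addnC -addn1 natrD mulrDl mul1r.
apply: le_trans (Hent_sub _ _ _) _; first by rewrite addnC -mulSn.
apply: lerD => //; apply: IH; apply: leq_trans h; rewrite mulSn leq_addl //.
Qed.

Lemma entropy_main n : (1 <= n)%N -> (n < m)%N ->
  Hent m / m%:R - n%:R * ln 2 / m%:R <= Hent n / n%:R.
Proof.
move=> n1 nm.
have m0 : (0 < m)%N by apply: leq_trans nm.
have mR : (0 : R) < m%:R by rewrite ltr0n.
have nR : (0 : R) < n%:R by rewrite ltr0n.
set j := (m %/ n)%N; set r := (m %% n)%N.
have em : m = (j * n + r)%N by rewrite /j /r -divn_eq.
have hjn : (j * n <= m)%N by rewrite [X in (_ <= X)%N]em leq_addr.
have hr : (r <= m)%N by rewrite [X in (_ <= X)%N]em leq_addl.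
have rn : (r < n)%N by rewrite /r ltn_mod.
have h1 : Hent m <= j%:R * Hent n + r%:R * ln 2.
  rewrite {1}em; apply: le_trans (Hent_sub _ _ _) _; first by rewrite -em.
  by apply: lerD; [apply: Hent_j | apply: Hent_r].
have l2 : (0 : R) <= ln 2 by apply: ln_ge0; lra.
have rnR : (r%:R : R) <= n%:R by rewrite ler_nat ltnW.
have h2 : r%:R * ln 2 <= n%:R * ln (2 : R) by apply: ler_wpM2r.
have hn0 := Hent_ge0 n (ltnW nm).
have jnR : (j%:R : R) * n%:R <= m%:R by rewrite -natrM ler_nat.
have h3 : j%:R * Hent n * n%:R <= Hent n * m%:R.
  by rewrite mulrAC mulrC; apply: ler_wpM2l.
rewrite -mulrBl ler_pdivrMr // mulrAC ler_pdivlMr //.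
have h4 : (Hent m - n%:R * ln 2) * n%:R <= j%:R * Hent n * n%:R.
  by apply: ler_wpM2r; [apply: ltW | lra].
by apply: le_trans h4 _.
Qed.
End Entropy.

Lemma bsum_prefix (V : pzRingType) n (w : seq bool) (F : seq bool -> V) : (size w <= n)%N ->
  bsum n (fun s => (take (size w) s == w)%:R * F s) = bsum (n - size w) (fun z => F (w ++ z)).
Proof.
move=> h.
have -> : bsum n (fun s => (take (size w) s == w)%:R * F s) =
   bsum (size w + (n - size w)) (fun s => (take (size w) s == w)%:R * F s) by rewrite subnKC.
rewrite bsum_cat.
rewrite (bsum_ext (G := fun x => (x == w)%:R * bsum (n - size w) (fun z => F (x ++ z)))).
  by rewrite bsum_indic.
move=> x hx; rewrite bsumZ; apply: bsum_ext => z _.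
by rewrite -hx take_size_cat.
Qed.

Lemma bsum_consP (V : zmodType) m n (F : seq bool -> V) : m = n.+1 ->
  bsum m F = bsum n (fun s => F (false :: s)) + bsum n (fun s => F (true :: s)).
Proof. by move=> ->. Qed.

Lemma bsum_rconsP (V : zmodType) m n (F : seq bool -> V) : m = n.+1 ->
  bsum m F = bsum n (fun s => F (rcons s false) + F (rcons s true)).
Proof. by move=> ->; apply: bsum_rcons. Qed.

Arguments bsum_consP {V m n F} _.
Arguments bsum_rconsP {V m n F} _.
Arguments bsum_prefix {V n w F} _.

Lemma ReD (R : realType) (a b : R[i]) : complex.Re (a + b) = complex.Re a + complex.Re b.
Proof. by case: a => ??; case: b. Qed.

Section Quantum.
Variable R : realType.
Local Notation C := R[i].
Variable k : nat.
Hypothesis hk : (3 <= k)%N.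
Variable U : 'M[C]_2.

Definition t0 : word k := nseq_tuple k false.
Definition liftv (v : vec R k) (s : seq bool) : C := v (insubd t0 s).
Definition u (c b : bool) : C := U (bI c) (bI b).
Definition Nm (z : C) : C := z^* * z.

Lemma insubdK' (s : seq bool) : size s = k -> val (insubd t0 s) = s.
Proof. by move=> h; rewrite insubdK //; apply/eqP. Qed.

Lemma sum_word (F : word k -> C) : \sum_(x : word k) F x = bsum k (fun s => F (insubd t0 s)).
Proof.
rewrite -(bsum_tuple k (fun s => F (insubd t0 s))); apply: eq_bigr => x _.
by rewrite valKd.
Qed.

Lemma app_opmulE A B v : app R k (opmul R k A B) v = app R k A (app R k B v).
Proof.
apply: functional_extensionality => z; rewrite /app /opmul.
rewrite (eq_bigr (fun x => \sum_y A z y * B y x * v x)); last by move=> x _; rewrite big_distrl.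
rewrite exchange_big; apply: eq_bigr => y _; rewrite big_distrr; apply: eq_bigr => x _.
by rewrite /= mulrA.
Qed.

Lemma app_opaddE A B v z : app R k (opadd R k A B) v z = app R k A v z + app R k B v z.
Proof. by rewrite /app -big_split; apply: eq_bigr => x _; rewrite /opadd mulrDl. Qed.

Lemma app_Pw w v z : app R k (Pw R k w) v z = (take (size w) z == w)%:R * v z.
Proof.
rewrite /app (bigD1 z) //= big1 ?addr0; first by rewrite /Pw eqxx.
by move=> x hx; rewrite /Pw eq_sym (negbTE hx) mul0r.
Qed.

Lemma ek : k = k.-1.+1.
Proof. by rewrite prednK //; apply: leq_trans hk. Qed.
Lemma ek1 : k.-1 = k.-2.+1.
Proof. by rewrite prednK //; rewrite -subn1 subn_gt0; apply: leq_trans hk. Qed.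

Lemma lift_Pw w v s : size s = k ->
  liftv (app R k (Pw R k w) v) s = (take (size w) s == w)%:R * liftv v s.
Proof. by move=> hs; rewrite /liftv app_Pw insubdK'. Qed.

Lemma lift_Ubar v z : size z = k ->
  liftv (app R k (Ubar R k U) v) z =
  u (nth false z k.-1) false * liftv v (false :: take k.-1 z) +
  u (nth false z k.-1) true * liftv v (true :: take k.-1 z).
Proof.
move=> hz; rewrite {1}/liftv {1}/app sum_word (bsum_consP ek).
have hsz : size (take k.-1 z) = k.-1 by rewrite size_take hz; case: ltnP => //; lia.
congr (_ + _).
  rewrite -(bsum_indic _ _ (fun s => u (nth false z k.-1) false * liftv v (false :: s)) hsz).
  apply: bsum_ext => s hs.
  by rewrite /Ubar !insubdK' //= ?hs -?ek // /u /liftv /= mulrA.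
rewrite -(bsum_indic _ _ (fun s => u (nth false z k.-1) true * liftv v (true :: s)) hsz).
apply: bsum_ext => s hs.
by rewrite /Ubar !insubdK' //= ?hs -?ek // /u /liftv /= mulrA.
Qed.

Definition sw (s : seq bool) := [seq nth false s (swapidx k i) | i <- iota 0 k].
Lemma size_sw s : size (sw s) = k.
Proof. by rewrite size_map size_iota. Qed.
Lemma nth_sw s i : (i < k)%N -> nth false (sw s) i = nth false s (swapidx k i).
Proof. by move=> h; rewrite (nth_map 0) ?size_iota // nth_iota. Qed.
Lemma swapidx_cases i : (swapidx k i = k.-1 /\ i = k.-2) \/ (swapidx k i = k.-2 /\ i = k.-1) \/ (swapidx k i = i /\ i <> k.-2 /\ i <> k.-1).
Proof. rewrite /swapidx; case: eqP => h1; [left|case: eqP => h2; [right;left|right;right]]; by []. Qed.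
Lemma swapidx_lt i : (i < k)%N -> (swapidx k i < k)%N.
Proof. move=> h; have := swapidx_cases i; lia. Qed.
Lemma swapidx_inv i : (i < k)%N -> swapidx k (swapidx k i) = i.
Proof. move=> h; have := swapidx_cases i; have := swapidx_cases (swapidx k i); lia. Qed.
Lemma sw_inv s : size s = k -> sw (sw s) = s.
Proof.
move=> hs; apply: (@eq_from_nth _ false); rewrite ?size_sw // => i hi.
by rewrite nth_sw // nth_sw ?swapidx_inv // swapidx_lt.
Qed.
Lemma sw_eq s z : size s = k -> size z = k -> (z == sw s) = (s == sw z).
Proof.
move=> hs hz; apply/eqP/eqP => ->; by rewrite sw_inv.
Qed.

Lemma lift_sigma v z : size z = k -> liftv (app R k (sigma R k) v) z = liftv v (sw z).
Proof.
move=> hz; rewrite {1}/liftv /app sum_word.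
rewrite -(bsum_indic k (sw z) (liftv v) (size_sw z)).
apply: bsum_ext => s hs.
by rewrite /sigma !insubdK' // -/(sw s) sw_eq.
Qed.

Lemma nth_sw_last z : nth false (sw z) k.-1 = nth false z k.-2.
Proof.
rewrite nth_sw; last by rewrite ek.
congr nth; have := swapidx_cases k.-1; have := swapidx_cases k.-2; lia.
Qed.
Lemma nth_sw_pen z : nth false (sw z) k.-2 = nth false z k.-1.
Proof.
rewrite nth_sw; last by lia.
congr nth; have := swapidx_cases k.-1; have := swapidx_cases k.-2; lia.
Qed.
Lemma take_sw z : size z = k -> take k.-2 (sw z) = take k.-2 z.
Proof.
move=> hz; apply: (@eq_from_nth _ false); first by rewrite !size_take size_sw hz.
have e : (if (k.-2 < k)%N then k.-2 else k) = k.-2 by rewrite ifT //; lia.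
move=> i; rewrite size_take size_sw e => hi'.
rewrite !nth_take // nth_sw; last by lia.
congr nth; have := swapidx_cases k.-1; have := swapidx_cases k.-2; have := swapidx_cases i; lia.
Qed.
Lemma nth_cons1 (b : bool) (s : seq bool) : nth false (b :: s) k.-1 = nth false s k.-2.
Proof. by rewrite ek1. Qed.
Lemma take_cons1 (b : bool) (s : seq bool) : take k.-1 (b :: s) = b :: take k.-2 s.
Proof. by rewrite ek1. Qed.
Lemma size_ct (b : bool) (z : seq bool) : size z = k -> size (b :: take k.-1 z) = k.
Proof. move=> hz; rewrite /= size_take hz ifT; lia. Qed.

Lemma size_tk (z : seq bool) : size z = k -> size (take k.-1 z) = k.-1.
Proof. move=> hz; rewrite size_take hz ifT; lia. Qed.

Lemma lift_P_eq v (b : bool) (s : seq bool) : size s = k.-1 ->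
  liftv (app R k (Pw R k [:: b]) v) (b :: s) = liftv v (b :: s).
Proof. move=> hs; rewrite lift_Pw /= ?hs -?ek // take0 eqxx /= mulr1n; apply: mul1r. Qed.
Lemma lift_P_neq v (b : bool) (s : seq bool) : size s = k.-1 ->
  liftv (app R k (Pw R k [:: b]) v) (~~ b :: s) = 0.
Proof. move=> hs; rewrite lift_Pw /= ?hs -?ek // take0; case: b; apply: mul0r. Qed.

Lemma lift_Uk v z : size z = k ->
  liftv (app R k (Uk R k U) v) z =
  u (nth false z k.-1) false * liftv v (false :: take k.-1 z) +
  u (nth false z k.-1) true * (u (nth false z k.-2) false * liftv v [:: true, false & take k.-2 z] +
                               u (nth false z k.-2) true * liftv v [:: true, true & take k.-2 z]).
Proof.
move=> hz.
have -> : liftv (app R k (Uk R k U) v) z =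
   liftv (app R k (Ubar R k U) (app R k (Pw R k [:: false]) v)) z +
   liftv (app R k (sigma R k) (app R k (Ubar R k U) (app R k (Ubar R k U) (app R k (Pw R k [:: true]) v)))) z.
  by rewrite /liftv /Uk app_opaddE !app_opmulE.
rewrite lift_Ubar // lift_P_eq ?size_tk // (lift_P_neq v false) ?size_tk // mulr0 addr0.
congr (_ + _).
rewrite lift_sigma // lift_Ubar ?size_sw // !lift_Ubar ?size_ct ?size_sw //.
rewrite !nth_cons1 !take_cons1 !take_takel; try lia.
rewrite !lift_P_eq ?size_take ?size_sw ?ifT //; try lia.
rewrite !(lift_P_neq v true) ?size_take ?size_sw ?ifT //; try lia.
rewrite !mulr0 !add0r nth_sw_last.
rewrite nth_take; last by lia.
rewrite nth_sw_pen take_sw //.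
ring.
all: rewrite /= size_take size_sw ifT; lia.
Qed.
End Quantum.

Lemma take_ac (w : seq bool) a c : take (size w).+1 (w ++ [:: a; c]) = rcons w a.
Proof. by elim: w => //= x w ->. Qed.
Lemma take_ac2 (w : seq bool) a c : take (size w) (w ++ [:: a; c]) = w.
Proof. by elim: w => //= x w ->. Qed.
Lemma nth_ac1 (w : seq bool) a c : nth false (w ++ [:: a; c]) (size w).+1 = c.
Proof. by elim: w. Qed.
Lemma nth_ac2 (w : seq bool) a c : nth false (w ++ [:: a; c]) (size w) = a.
Proof. by elim: w. Qed.

Section Q2.
Variable R : realType.
Local Notation C := R[i].
Variable k : nat.
Hypothesis hk : (3 <= k)%N.
Variable U : 'M[C]_2.
Hypothesis hU : unitary2 R U.
Local Notation lift := (liftv R k).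
Local Notation u := (u R U).
Local Notation Nm := (Nm R).

Lemma bIf : bI false = ord0. Proof. by apply: val_inj; rewrite /= inordK. Qed.
Lemma bIt : bI true = ord_max. Proof. by apply: val_inj; rewrite /= inordK. Qed.

Lemma colorth (b b' : bool) : (u false b)^* * u false b' + (u true b)^* * u true b' = (b == b')%:R.
Proof.
have := congr1 (fun M : 'M[C]_2 => M (bI b) (bI b')) hU.1.
rewrite !mxE !big_ord_recl big_ord0 addr0 !mxE /u.
have -> : fintype.lift ord0 ord0 = ord_max :> 'I_2 by apply: val_inj.
rewrite -bIf -bIt => ->.
by case: b; case: b'; rewrite ?bIf ?bIt.
Qed.

Lemma colsum (a b : C) :
  Nm (u false false * a + u false true * b) + Nm (u true false * a + u true true * b) = Nm a + Nm b.
Proof.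
have e00 := colorth false false; have e01 := colorth false true.
have e10 := colorth true false; have e11 := colorth true true.
rewrite /= in e00 e01 e10 e11.
rewrite /Nm !rmorphD !rmorphM.
set x00 := u false false in e00 e01 e10 e11 *; set x01 := u false true in e00 e01 e10 e11 *.
set x10 := u true false in e00 e01 e10 e11 *; set x11 := u true true in e00 e01 e10 e11 *.
have -> : (x00^* * a^* + x01^* * b^*) * (x00 * a + x01 * b) +
  (x10^* * a^* + x11^* * b^*) * (x10 * a + x11 * b) =
  a^* * a * (x00^* * x00 + x10^* * x10) + a^* * b * (x00^* * x01 + x10^* * x11) +
  b^* * a * (x01^* * x00 + x11^* * x10) + b^* * b * (x01^* * x01 + x11^* * x11) by ring.
rewrite e00 e01 e10 e11 /=.
ring.
Qed.

Lemma Nm_ge0 (z : C) : 0 <= Nm z.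
Proof. by rewrite /Nm -normCKC exprn_ge0. Qed.

Lemma NmM (a b : C) : Nm (a * b) = Nm a * Nm b.
Proof. by rewrite /Nm rmorphM; ring. Qed.

Definition Q (psi : vec R k) (w : seq bool) : C :=
  bsum k (fun s => (take (size w) s == w)%:R * Nm (lift psi s)).

Lemma Q_pref psi w : (size w <= k)%N -> Q psi w = bsum (k - size w) (fun z => Nm (lift psi (w ++ z))).
Proof. by move=> h; rewrite /Q bsum_prefix. Qed.

Lemma Q_ge0 psi w : 0 <= Q psi w.
Proof. by apply: bsum_ge0 => s _; apply: mulr_ge0; [apply: ler0n | apply: Nm_ge0]. Qed.

Lemma Q_rcons psi w : (size w < k)%N -> Q psi w = Q psi (rcons w false) + Q psi (rcons w true).
Proof.
move=> h; rewrite !Q_pref ?size_rcons //; last by apply: ltnW.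
rewrite (bsum_consP (n := k - (size w).+1)); last by lia.
  by congr (_ + _); apply: bsum_ext => z _; rewrite cat_rcons.
Qed.

Lemma key v (y : seq bool) : (size y <= k.-2)%N ->
  bsum k (fun s => (take (size y) s == y)%:R * Nm (lift (app R k (Uk R k U) v) s)) =
  Q v (false :: y) + Q v [:: true, false & y] + Q v [:: true, true & y].
Proof.
move=> hy.
rewrite bsum_prefix; last by lia.
have e : (k - size y = (k.-2 - size y) + 2)%N by lia.
rewrite e bsum_cat.
rewrite !Q_pref /=; try lia.
have e1 : (k - (size y).+1 = (k.-2 - size y).+1)%N by lia.
have e2 : (k - (size y).+2 = k.-2 - size y)%N by lia.
rewrite e1 e2 bsum_rcons -!bsumD.
apply: bsum_ext => x hx /=.
have hw : size (y ++ x) = k.-2 by rewrite size_cat hx; lia.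
rewrite !catA !lift_Uk ?size_cat ?hw //=; try lia.
rewrite -!rcons_cat.
move: hw; set w := y ++ x => hw.
have e3 : k.-2 = size w by rewrite hw.
have e4 : k.-1 = (size w).+1 by rewrite (ek1 _ hk) hw.
rewrite e3 e4 !take_ac !take_ac2 !nth_ac1 !nth_ac2 !colsum addrACA colsum.
by rewrite addrA.
Qed.

Lemma stat psi lam : (forall z, app R k (Uk R k U) psi z = lam * psi z) ->
  forall y : seq bool, (size y <= k.-2)%N ->
  Nm lam * Q psi y = Q psi (false :: y) + Q psi [:: true, false & y] + Q psi [:: true, true & y].
Proof.
move=> heig y hy; rewrite -key // /Q bsumZ; apply: bsum_ext => s _.
by rewrite /liftv heig NmM mulrCA.
Qed.

Lemma stat1 psi lam : (forall z, app R k (Uk R k U) psi z = lam * psi z) ->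
  Q psi [::] = 1 ->
  forall y : seq bool, (size y <= k.-2)%N ->
  Q psi y = Q psi (false :: y) + Q psi [:: true, false & y] + Q psi [:: true, true & y].
Proof.
move=> heig h1.
have hl : Nm lam = 1.
  have := stat _ _ heig [::] (leq0n _); rewrite h1 mulr1 => ->.
  rewrite -addrA -(Q_rcons psi [:: true]) /=; last by apply: leq_trans hk.
  by rewrite -(Q_rcons psi [::]) ?h1 //; apply: leq_trans hk.
by move=> y hy; rewrite -(stat _ _ heig _ hy) hl mul1r.
Qed.

Lemma rcons_take1 (t : seq bool) c : size t = k.-1 -> take k.-1 (rcons t c) = t.
Proof. by move=> ht; rewrite -cats1 -ht take_size_cat. Qed.
Lemma rcons_nth1 (t : seq bool) c : size t = k.-1 -> nth false (rcons t c) k.-1 = c.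
Proof. by move=> ht; rewrite nth_rcons ht ltnn eqxx. Qed.
Lemma size_rc (t : seq bool) c : size t = k.-1 -> size (rcons t c) = k.
Proof. by move=> ht; rewrite size_rcons ht -(ek _ hk). Qed.

Lemma lift_adjUbar w x : size x = k ->
  lift (app R k (adj R k (Ubar R k U)) w) x =
  (u false (nth false x 0))^* * lift w (rcons (behead x) false) +
  (u true (nth false x 0))^* * lift w (rcons (behead x) true).
Proof.
move=> hx; rewrite {1}/liftv {1}/app sum_word (bsum_rconsP (ek _ hk)).
have hsz : size (behead x) = k.-1 by rewrite size_behead hx.
rewrite -(bsum_indic _ _ (fun t => (u false (nth false x 0))^* * lift w (rcons t false) +
  (u true (nth false x 0))^* * lift w (rcons t true)) hsz).
apply: bsum_ext => t ht.
rewrite /adj /Ubar !insubdK' ?size_rc // !rcons_take1 // !rcons_nth1 //.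
rewrite !rmorphM !rmorph_nat (eq_sym (behead x)) /liftv /u /=.
ring.
Qed.

Lemma lift_UP1 psi s : size s = k ->
  lift (app R k (Ubar R k U) (app R k (Pw R k [:: true]) psi)) s =
  u (nth false s k.-1) true * lift psi (true :: take k.-1 s).
Proof.
move=> hs; rewrite lift_Ubar // (lift_P_neq _ _ hk _ true) ?size_tk // lift_P_eq ?size_tk //.
by rewrite mulr0 add0r.
Qed.

Lemma lift_UP1r psi t c : size t = k.-1 ->
  lift (app R k (Ubar R k U) (app R k (Pw R k [:: true]) psi)) (rcons t c) =
  u c true * lift psi (true :: t).
Proof. by move=> ht; rewrite lift_UP1 ?size_rc // rcons_take1 // rcons_nth1. Qed.

Lemma P1_proj psi (c0 : C) (y : seq bool) s : (size y <= k.-1)%N -> size s = k ->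
  lift (app R k (opmul R k (P'1 R k U) (Pw R k y))
          (fun z => c0 * app R k (opmul R k (Ubar R k U) (Pw R k [:: true])) psi z)) s =
  (take (size y) s == y)%:R * (c0 * (u (nth false s k.-1) true * lift psi (true :: take k.-1 s))).
Proof.
move=> hy hs.
rewrite /P'1 !app_opmulE.
set W := (fun z => _).
have hW : forall t c, size t = k.-1 -> lift W (rcons t c) = c0 * (u c true * lift psi (true :: t)).
  move=> t c ht.
  have -> : lift W (rcons t c) = c0 * lift (app R k (Ubar R k U) (app R k (Pw R k [:: true]) psi)) (rcons t c).
    by rewrite /W /liftv.
  by rewrite (lift_UP1r psi t c ht).
rewrite lift_Ubar // (lift_P_neq _ _ hk _ true) ?size_tk // lift_P_eq ?size_tk // mulr0 add0r.
rewrite lift_adjUbar ?size_ct //= !lift_Pw ?size_rc ?size_tk // !hW ?size_tk //.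
rewrite -!cats1 !takel_cat ?size_tk //.
rewrite take_takel //.
have e := colorth true true; rewrite /= in e.
set L := lift psi _; set p := (_ == y)%:R.
have -> : u (nth false s k.-1) true *
   ((u false true)^* * (p * (c0 * (u false true * L))) +
    (u true true)^* * (p * (c0 * (u true true * L)))) =
   u (nth false s k.-1) true * p * c0 * L * ((u false true)^* * u false true + (u true true)^* * u true true) by ring.
rewrite e; ring.
Qed.

Lemma Gamma_eq psi : Gamma R k psi = 1 + Q psi [:: true].
Proof.
rewrite /Gamma /inner sum_word /Q; congr (_ + _); apply: bsum_ext => s hs.
by rewrite app_Pw insubdK' // /Nm /liftv; ring.
Qed.

Lemma Qcons_true psi (y : seq bool) : (size y <= k.-1)%N ->
  Q psi (true :: y) = bsum k.-1 (fun t => (take (size y) t == y)%:R * Nm (lift psi (true :: t))).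
Proof.
move=> hy; rewrite /Q (bsum_consP (ek _ hk)).
rewrite (bsum_ext (G := fun _ => 0)) ?bsum0 ?add0r; last first.
  by move=> t _ /=; rewrite ?eqseq_cons /= mul0r.
by apply: bsum_ext => t _ /=; rewrite ?eqseq_cons ?eqxx.
Qed.

Lemma mubar_eq psi (y : seq bool) : (size y <= k.-1)%N ->
  mubar R k U psi y = complex.Re ((Q psi y + Q psi (true :: y)) * (Gamma R k psi)^-1).
Proof.
move=> hy.
rewrite /mubar /inner2 /tPw /PsiK /=.
congr complex.Re.
set c0 := (sqrtC (Gamma R k psi))^-1.
have G1 : 1 <= Gamma R k psi by rewrite Gamma_eq lerDl Q_ge0.
have c0r : c0^* = c0.
  apply: conj_Creal; apply: ger0_real; rewrite /c0 invr_ge0 sqrtC_ge0.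
  by apply: le_trans G1.
have hc : c0^* * c0 = (Gamma R k psi)^-1.
  by rewrite c0r /c0 -expr2 exprVn sqrtCK.
have T1 : inner R k (fun z => c0 * psi z) (app R k (Pw R k y) (fun z => c0 * psi z)) = c0^* * c0 * Q psi y.
  rewrite /inner sum_word /Q bsumZ; apply: bsum_ext => s hs.
  by rewrite app_Pw insubdK' // /Nm /liftv rmorphM; ring.
set W := (fun z => c0 * app R k (opmul R k (Ubar R k U) (Pw R k [:: true])) psi z).
have T2 : inner R k W (app R k (opmul R k (P'1 R k U) (Pw R k y)) W) = c0^* * c0 * Q psi (true :: y).
  rewrite /inner sum_word.
  have T2s : forall s, size s = k -> (W (insubd (t0 k) s))^* * app R k (opmul R k (P'1 R k U) (Pw R k y)) W (insubd (t0 k) s)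
     = c0^* * c0 * ((take (size y) s == y)%:R * Nm (u (nth false s k.-1) true) * Nm (lift psi (true :: take k.-1 s))).
    move=> s hs.
    have := P1_proj psi c0 y s hy hs; rewrite /liftv => ->.
    have -> : W (insubd (t0 k) s) = c0 * lift (app R k (Ubar R k U) (app R k (Pw R k [:: true]) psi)) s.
      by rewrite /W app_opmulE.
    rewrite lift_UP1 // /Nm /liftv !rmorphM.
    have e : forall b : bool, (b%:R : C)^* = b%:R by move=> b; rewrite rmorph_nat.
    ring.
  rewrite (bsum_ext (G := fun s => c0^* * c0 * ((take (size y) s == y)%:R * Nm (u (nth false s k.-1) true) * Nm (lift psi (true :: take k.-1 s))))) //.
  rewrite -bsumZ Qcons_true //; congr (_ * _).
  rewrite (bsum_rconsP (ek _ hk)); apply: bsum_ext => t ht.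
  rewrite !rcons_nth1 // !rcons_take1 // -!cats1 !takel_cat ?ht //.
  have e := colorth true true; rewrite /= in e.
  rewrite /Nm; set p := (_ == y)%:R; set L := lift psi _.
  have -> : p * ((u false true)^* * u false true) * (L^* * L) + p * ((u true true)^* * u true true) * (L^* * L)
    = p * (L^* * L) * ((u false true)^* * u false true + (u true true)^* * u true true) by ring.
  by rewrite e mulr1.
rewrite T1 T2 hc; ring.
Qed.
End Q2.

Lemma Re_ge0 (R : realType) (x : R[i]) : 0 <= x -> 0 <= complex.Re x.
Proof. by rewrite lecE => /andP[_ ]. Qed.

Theorem proposition9 (R : realType) (k : nat) (U : 'M[R[i]]_2) (psi : vec R k)
    (n : nat) :
  (3 <= k)%N ->
  unitary2 R U ->
  (forall i j : 'I_2, `|U i j| = (sqrtC 2)^-1) ->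
  inner R k psi psi = 1 ->
  (exists lam : R[i], forall z, app R k (Uk R k U) psi z = lam * psi z) ->
  (1 <= n)%N -> (n < k.-1)%N ->
  hn R k U psi (k.-1) / (k.-1)%:R - n%:R * ln 2 / (k.-1)%:R <= hn R k U psi n / n%:R.
Proof.
move=> hk hU _ hpsi [lam heig] hn1 hnk.
have Q0 : Q R k psi [::] = 1.
  rewrite -hpsi /inner sum_word /Q; apply: bsum_ext => s _.
  rewrite take0 eqxx /= mulr1n /Nm /liftv; ring.
set G := Gamma R k psi.
have GE : G = 1 + Q R k psi [:: true] by rewrite /G Gamma_eq.
have G1 : 1 <= G by rewrite GE lerDl Q_ge0.
have G0 : G != 0 by apply: lt0r_neq0; apply: lt_le_trans G1; apply: ltr01.
pose mu := fun y => complex.Re ((Q R k psi y + Q R k psi (true :: y)) * G^-1).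
have hmu : forall y : seq bool, (size y <= k.-1)%N -> mubar R k U psi y = mu y.
  by move=> y hy; rewrite (mubar_eq _ _ hk _ hU) //.
have hH : forall m, (m <= k.-1)%N -> hn R k U psi m = Hent R mu m.
  move=> m hm; rewrite /hn /Hent (bsum_tuple m (fun y => xlogx R (mubar R k U psi y))).
  congr (- _); apply: bsum_ext => y hy.
  by rewrite hmu // hy.
rewrite !hH //; last by apply: ltnW.
apply: (entropy_main R k.-1 mu) => //.
- rewrite /mu Q0 -GE mulfV //.
- move=> y _; apply: Re_ge0; apply: mulr_ge0; first by apply: addr_ge0; apply: Q_ge0.
  by rewrite invr_ge0; apply: le_trans G1; apply: ler01.
- move=> y hy; rewrite /mu -ReD; congr complex.Re.
  rewrite (Q_rcons _ _ hk psi y); last by lia.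
  rewrite (Q_rcons _ _ hk psi (true :: y)) /=; last by lia.
  ring.
- move=> y hy; rewrite /mu -ReD; congr complex.Re.
  rewrite (stat1 _ _ hk _ hU _ _ heig Q0 y); last by lia.
  ring.
Qed.
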